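(* Let $R$ be a commutative ring, $n\ge5$, and let $\Delta$ be a non-singular minimal $(d-1)$-complex on $[n-1]$ with $1\le d\le n-4$. Then every nonzero element of $H^0(\overline{\mathcal M}_{0,n},D_\Delta)$ is of the form $F_{(\Delta,w)}$ for some balancing $R$-weighting $w$ of $\Delta$; that is, the balancing weightings of $\Delta$ account for the complete linear system $|D_\Delta|$.
   Context: Fix a Kapranov presentation $\overline{\mathcal M}_{0,n}\cong\operatorname{Bl}\mathbb P^{n-3}$ over $\operatorname{Spec}R$: $\operatorname{Pic}=\mathbb ZH\oplus\bigoplus_I\mathbb ZE_I$ ($I\subseteq[n-1]$, $1\le|I|\le n-4$). Let $P=R[y_1,\dots,y_{n-1},(x_I)_I]$ with $\operatorname{Pic}$-grading $[x_I]=E_I$, $[y_i]=H-\sum_{I\not\ni i}E_I$, and $z_i=\prod_{I\ni i}x_I$; $\operatorname{Cox}(\overline{\mathcal M}_{0,n})=\bigoplus_DH^0(D)$ is identified with $R[(x_I^{\pm1}),(y_i/z_i-y_j/z_j)]\cap P$. A $k$-simplex is a multiset of cardinality $k+1$ with entries in $[n-1]$; a $k$-complex a finite set of distinct $k$-simplices; non-singular means no repeated entries in any simplex. An $R$-weighting assigns nonzero $w_\sigma\in R$; with $c(\sigma,S)=\prod_a\binom{\operatorname{mult}_a\sigma}{\operatorname{mult}_aS}$ it is balancing if $\sum_\sigma c(\sigma,S)w_\sigma=0$ for all multisets $S$ of cardinality $j$, $0\le j\le k-1$. Minimal: balanceable, with no nonempty proper subset balanceable. For a balanced $(d-1)$-complex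 $(\Delta,w)$, $F_{(\Delta,w)}=\big(\prod_Ix_I^{a_I}\big)\sum_{\sigma}w_\sigma y_\sigma/z_\sigma$ where $y_\sigma=\prod y_i^{\operatorname{mult}_i\sigma}$, $z_\sigma=\prod z_i^{\operatorname{mult}_i\sigma}$, $a_I=\max_\sigma\sum_{i\in I}\operatorname{mult}_i\sigma$. $D_\Delta=dH-\sum_I\big(d-\max_{\sigma\in\Delta}\sum_{i\in I}\operatorname{mult}_i(\sigma)\big)E_I$. *)

(* Defs.v *)
From HB Require Import structures.
From mathcomp Require Import all_boot all_order all_algebra.
Set Implicit Arguments. Unset Strict Implicit. Unset Printing Implicit Defensive.
Import Order.TTheory GRing.Theory Num.Theory.
Local Open Scope ring_scope.

(* Convention: the index set [n-1] = {1,...,n-1} is modelled by 'I_(n.-1)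
   (element k stands for k+1). *)

(* Valid index sets I for the exceptional divisors E_I:
   I ⊆ [n-1], 1 <= |I| <= n-4. *)
Definition validI (n : nat) (I : {set 'I_n.-1}) : bool :=
  (1 <= #|I|)%N && (#|I| <= n - 4)%N.
Definition Xidx (n : nat) := {I : {set 'I_n.-1} | validI I}.

Definition mset (n : nat) := {ffun 'I_n.-1 -> nat}.
Definition mcard (n : nat) (s : mset n) : nat := (\sum_i s i)%N.

(* Monomials y^a x^b with a : nat exponents on y_1..y_{n-1} and
   integer (Laurent) exponents b on the x_I. *)
Definition mono (n : nat) := (mset n * {ffun Xidx n -> int})%type.
Definition mono_mul (n : nat) (m1 m2 : mono n) : mono n :=
  ([ffun i => m1.1 i + m2.1 i]%N, [ffun I => m1.2 I + m2.2 I]).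
Definition mono1 (n : nat) : mono n := ([ffun => 0%N], [ffun => 0]).

(* Laurent polynomials in R[y_i, x_I^{±1}] given as finite formal sums of
   terms (coefficient, monomial); two of them are equal iff [coef]s agree. *)
Definition laurent (R : comPzRingType) (n : nat) := seq (R * mono n).
Definition coef (R : comPzRingType) (n : nat) (p : laurent R n) (m : mono n) : R :=
  \sum_(t <- p | t.2 == m) t.1.
Definition lmul (R : comPzRingType) (n : nat) (p q : laurent R n) : laurent R n :=
  [seq (a.1 * b.1, mono_mul a.2 b.2) | a <- p, b <- q].

Definition xmono (n : nat) (I : Xidx n) (e : int) : mono n :=
  ([ffun => 0%N], [ffun J => if J == I then e else 0]).
(* the Laurent monomial y_i / z_i, where z_i = prod_{I ∋ i} x_I *)
Definition yzmono (n : nat) (i : 'I_n.-1) : mono n :=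
  ([ffun j => if j == i then 1%N else 0%N],
   [ffun J : Xidx n => if i \in val J then -1 else 0]).

(* The R-subalgebra R[(x_I^{±1}), (y_i/z_i - y_j/z_j)] of R[y, x^{±1}]. *)
Inductive inA (R : comPzRingType) (n : nat) : laurent R n -> Prop :=
| inA_const (r : R) : inA [:: (r, @mono1 n)]
| inA_x (I : Xidx n) : inA [:: (1, xmono I 1)]
| inA_xinv (I : Xidx n) : inA [:: (1, xmono I (-1))]
| inA_gen (i j : 'I_n.-1) : inA [:: (1, yzmono i); (-1, yzmono j)]
| inA_add p q : inA p -> inA q -> inA (p ++ q)
| inA_mul p q : inA p -> inA q -> inA (lmul p q)
| inA_ext p q : inA p -> coef p =1 coef q -> inA q.

Definition inP (R : comPzRingType) (n : nat) (p : laurent R n) : Prop :=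
  forall m : mono n, coef p m != 0 -> forall I, 0 <= m.2 I.

Definition inCox (R : comPzRingType) (n : nat) (p : laurent R n) : Prop :=
  inA p /\ inP p.

(* Pic = Z H ⊕ ⊕_I Z E_I ; a class is (H-coefficient, E_I-coefficients). *)
Definition pic (n : nat) := (int * {ffun Xidx n -> int})%type.
(* [x_I] = E_I, [y_i] = H - sum_{I ∌ i} E_I *)
Definition mono_deg (n : nat) (m : mono n) : pic n :=
  ((\sum_i (m.1 i)%:Z)%R,
   [ffun I : Xidx n => m.2 I - (\sum_(i | i \notin val I) (m.1 i)%:Z)%R]).

Definition inH0 (R : comPzRingType) (n : nat) (D : pic n) (p : laurent R n) : Prop :=
  inCox p /\ forall m, coef p m != 0 -> mono_deg m = D.

Definition lnonzero (R : comPzRingType) (n : nat) (p : laurent R n) : Prop :=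
  exists m, coef p m != 0.

Definition complex (n k : nat) (Delta : seq (mset n)) : Prop :=
  uniq Delta /\ forall s, s \in Delta -> mcard s = k.+1.
Definition nonsingular (n : nat) (Delta : seq (mset n)) : Prop :=
  forall s, s \in Delta -> forall a, (s a <= 1)%N.

Definition cbin (n : nat) (s S : mset n) : nat := (\prod_a 'C(s a, S a))%N.

Definition weighting (R : comPzRingType) (n : nat) (Delta : seq (mset n))
    (w : mset n -> R) : Prop :=
  forall s, s \in Delta -> w s != 0.

Definition balancing (R : comPzRingType) (n k : nat) (Delta : seq (mset n))
    (w : mset n -> R) : Prop :=
  weighting Delta w /\
  forall S : mset n, (mcard S <= k.-1)%N -> (0 < k)%N ->
    \sum_(s <- Delta) (cbin s S)%:R * w s = 0.

Definition balanceable (R : comPzRingType) (n k : nat) (Delta : seq (mset n)) : Prop :=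
  exists w : mset n -> R, balancing k Delta w.

Definition minimal (R : comPzRingType) (n k : nat) (Delta : seq (mset n)) : Prop :=
  Delta != [::] /\ balanceable R k Delta /\
  forall Delta' : seq (mset n), uniq Delta' -> Delta' != [::] ->
    {subset Delta' <= Delta} -> (exists2 s, s \in Delta & s \notin Delta') ->
    ~ balanceable R k Delta'.

Definition aI (n : nat) (Delta : seq (mset n)) (I : Xidx n) : nat :=
  (\max_(s <- Delta) \sum_(i in val I) s i)%N.

Definition DDelta (n d : nat) (Delta : seq (mset n)) : pic n :=
  (d%:Z, [ffun I => - (d%:Z - (aI Delta I)%:Z)]).

(* F_(Delta,w) = (prod_I x_I^{a_I}) sum_sigma w_sigma y_sigma / z_sigma *)
Definition FDw (R : comPzRingType) (n : nat) (Delta : seq (mset n))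
    (w : mset n -> R) : laurent R n :=
  [seq (w s, (s, [ffun I : Xidx n =>
                   (aI Delta I)%:Z - (\sum_(i in val I) s i)%N%:Z]))
  | s <- Delta].

(* Main.v *)
Require Import Defs.
From HB Require Import structures.
From mathcomp Require Import all_boot all_order all_algebra.
From mathcomp Require Import mpoly.
From mathcomp Require Import ring.
Import Order.TTheory GRing.Theory Num.Theory.
Local Open Scope ring_scope.
Set Implicit Arguments. Unset Strict Implicit. Unset Printing Implicit Defensive.

Section NZ.
Variable R : comPzRingType.
Hypothesis H : (1:R) != 0.
Definition nzR (_ : (1:R) != 0) : Type := R.
HB.instance Definition _ := GRing.ComPzRing.on (nzR H).
HB.instance Definition _ := GRing.PzSemiRing_isNonZero.Build (nzR H) H.
End NZ.

Lemma sum_if1 (V : nmodType) (T : eqType) (L : seq T) t (F : T -> V) :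
  t \in L -> uniq L -> \sum_(m <- L) (if t == m then F m else 0) = F t.
Proof.
move=> tL uL; rewrite (bigD1_seq t) //= eqxx big1 ?addr0 // => m.
by rewrite eq_sym => /negbTE ->.
Qed.

Section Ev.
Variable R : comPzRingType.
Hypothesis H : (1:R) != 0.
Variable n : nat.
Local Notation N := n.-1.
Local Notation S := (nzR H).
Local Notation P := {mpoly S[N]}.

Definition mon (g : 'I_N -> P) (m : mono n) : P := \prod_i g i ^+ m.1 i.

Definition Ev (g : 'I_N -> P) (p : laurent R n) : P :=
  \sum_(t <- p) (t.1 : S)%:MP * mon g t.2.

Lemma Ev_cat g p q : Ev g (p ++ q) = Ev g p + Ev g q.
Proof. by rewrite /Ev big_cat. Qed.

Lemma mon_mul g m1 m2 : mon g (mono_mul m1 m2) = mon g m1 * mon g m2.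
Proof.
rewrite /mon -big_split /=; apply: eq_bigr => i _.
by rewrite ffunE exprD.
Qed.

Lemma Ev_mul g p q : Ev g (lmul p q) = Ev g p * Ev g q.
Proof.
rewrite /Ev /lmul big_allpairs_dep mulr_suml; apply: eq_bigr => a _.
rewrite mulr_sumr; apply: eq_bigr => b _ /=.
rewrite mon_mul (rmorphM (@mpolyC N S) (a.1 : S) (b.1 : S)).
rewrite -!mulrA; congr (_ * _); rewrite mulrCA; congr (_ * _).
Qed.

Lemma Ev_coef g p (L : seq (mono n)) : uniq L -> {subset map snd p <= L} ->
  Ev g p = \sum_(m <- L) ((coef p m : S)%:MP * mon g m).
Proof.
move=> uL sub.
rewrite /coef.
transitivity (\sum_(m <- L) \sum_(t <- p) (if t.2 == m then (t.1 : S)%:MP * mon g m else 0)).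
  rewrite exchange_big. rewrite /Ev. apply: eq_big_seq => t tp.
  have tL : t.2 \in L by apply: sub; apply: map_f.
  by rewrite (sum_if1 (fun m => (t.1 : S)%:MP * mon g m) tL uL).
apply: eq_bigr => m _.
rewrite (rmorph_sum (@mpolyC N S)) mulr_suml big_mkcond [in RHS]big_mkcond /=.
by apply: eq_bigr => t _; case: ifP.
Qed.

Lemma Ev_ext g p q : coef p =1 coef q -> Ev g p = Ev g q.
Proof.
move=> e.
have sp : {subset map snd p <= undup (map snd (p ++ q))}.
  by move=> x xp; rewrite mem_undup map_cat mem_cat xp.
have sq : {subset map snd q <= undup (map snd (p ++ q))}.
  by move=> x xq; rewrite mem_undup map_cat mem_cat xq orbT.
rewrite (Ev_coef g (undup_uniq _) sp) (Ev_coef g (undup_uniq _) sq).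
by apply: eq_bigr => m _; rewrite e.
Qed.

Lemma mon_zero g (b : {ffun Xidx n -> int}) : mon g ([ffun => 0%N], b) = 1.
Proof. by rewrite /mon big1 // => i _; rewrite ffunE expr0. Qed.

Lemma mon_yz g i : mon g (yzmono i) = g i.
Proof.
rewrite /mon (bigD1 i) //= ffunE eqxx expr1 big1 ?mulr1 // => j /negbTE ji.
by rewrite ffunE ji expr0.
Qed.

Definition g1 : 'I_N -> P := fun j => 'X_j + 1.
Definition g0 : 'I_N -> P := fun j => 'X_j.

Lemma inA_inv p : inA p -> Ev g1 p = Ev g0 p.
Proof.
elim=> {p}.
- by move=> r; rewrite /Ev !big_cons !big_nil !mon_zero.
- by move=> I; rewrite /Ev !big_cons !big_nil !mon_zero.
- by move=> I; rewrite /Ev !big_cons !big_nil !mon_zero.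
- move=> i j; rewrite /Ev !big_cons !big_nil !mon_yz /g1 /g0.
  rewrite (rmorphN1 (@mpolyC N S)) (rmorph1 (@mpolyC N S)).
  by rewrite !addr0 !mul1r !mulN1r opprD addrACA subrr addr0.
- by move=> p q _ hp _ hq; rewrite !Ev_cat hp hq.
- by move=> p q _ hp _ hq; rewrite !Ev_mul hp hq.
- by move=> p q _ hp e; rewrite -(Ev_ext g1 e) -(Ev_ext g0 e).
Qed.

Definition mX (s : mset n) : 'X_{1..N} := [multinom s i | i < N].

Lemma key (a s : mset n) :
  (\prod_i g1 i ^+ a i)@_(mX s) = ((cbin a s)%:R : S).
Proof.
set M := (\sum_i (a i + s i)).+1.
have hM : forall i, (a i < M)%N /\ (s i < M)%N.
  move=> i; rewrite /M !ltnS (bigD1 i) //=; split.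
    by rewrite -addnA leq_addr.
  by apply: leq_trans (leq_addl (a i) _) (leq_addr _ _).
have E : forall i, g1 i ^+ a i = \sum_(k < M) 'X_i ^+ k *+ 'C(a i, k).
  move=> i; rewrite /g1 exprD1n.
  rewrite (big_ord_widen _ (fun k => 'X_i ^+ k *+ 'C(a i, k)) (hM i).1).
  rewrite big_mkcond /=; apply: eq_bigr => k _.
  case: ifP => // /negbT; rewrite -leqNgt => h.
  by rewrite bin_small // mulr0n.
rewrite (eq_bigr _ (fun i _ => E i)) bigA_distr_bigA /=.
have E2 : forall phi : {ffun 'I_N -> 'I_M},
   \prod_i ('X_i ^+ phi i *+ 'C(a i, phi i)) =
   ('X_[[multinom (phi i : nat) | i < N]] : P) *+ \prod_i 'C(a i, phi i).
  move=> phi; rewrite prodrMn; congr (_ *+ _).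
  by rewrite mpolyXE_id; apply: eq_bigr => i _; rewrite mnmE.
rewrite (eq_bigr _ (fun phi _ => E2 phi)).
rewrite (raddf_sum (mcoeff (mX s))).
pose phi0 : {ffun 'I_N -> 'I_M} := [ffun i => Ordinal (hM i).2].
rewrite (bigD1 phi0) //= [X in _ + X]big1 ?addr0.
  rewrite mcoeffMn mcoeffX.
  have -> : [multinom (phi0 i : nat) | i < N] == mX s.
    by apply/eqP/mnmP => i; rewrite /mX !mnmE ffunE.
  rewrite /cbin -mulr_natl mulr1 !natr_prod.
  by apply: eq_bigr => i _; rewrite ffunE.
move=> phi nphi; rewrite mcoeffMn mcoeffX.
case: eqP => [e|_]; last by rewrite mul0rn.
exfalso; move/eqP: nphi; apply; apply/ffunP => i; apply: val_inj.
rewrite ffunE /=.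
have := congr1 (fun m : 'X_{1..N} => m i) e.
by rewrite /mX !mnmE.
Qed.

End Ev.

Lemma PoszS (I : finType) (P : pred I) (F : I -> nat) :
  (\sum_(i | P i) F i)%N%:Z = \sum_(i | P i) (F i)%:Z.
Proof. by rewrite (big_morph Posz PoszD (erefl 0%:Z)). Qed.

Lemma sum_le_eq (I : finType) (x y : I -> nat) :
  (forall i, x i <= y i)%N -> (\sum_i x i)%N = (\sum_i y i)%N -> forall i, x i = y i.
Proof.
move=> le e i; apply/eqP; rewrite eqn_leq le /=; rewrite leqNgt; apply/negP => lt.
move: e; rewrite (bigD1 i) //= [in RHS](bigD1 i) //= => e.
have : (x i + \sum_(j | j != i) x j < y i + \sum_(j | j != i) y j)%N.
  by rewrite -addSn leq_add // leq_sum.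
by rewrite e ltnn.
Qed.

From mathcomp Require Import zify.

Lemma supp_lemma (R : comPzRingType) n d (Delta : seq (mset n))
  (hn : (5 <= n)%N) (hd1 : (1 <= d)%N) (hd2 : (d <= n - 4)%N)
  (hcx : complex d.-1 Delta) (hns : nonsingular Delta)
  (f : laurent R n) (hf : inH0 (DDelta d Delta) f) m :
  coef f m != 0 -> m.1 \in Delta /\
  m.2 = [ffun I : Xidx n => (aI Delta I)%:Z - (\sum_(i in val I) m.1 i)%N%:Z].
Proof.
move=> nz.
case: hf => [[_ hP] hdeg].
have hp := hP m nz.
have := hdeg m nz; rewrite /mono_deg /DDelta; case=> hs1 /ffunP hI.
have md : mcard m.1 = d.
  by apply/eqP; rewrite -eqz_nat /mcard PoszS hs1.
have eq2 : forall I : Xidx n,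
    m.2 I = (aI Delta I)%:Z - (\sum_(i in val I) m.1 i)%N%:Z.
  move=> I; have := hI I; rewrite !ffunE.
  have e : ((\sum_(i in val I) m.1 i) + (\sum_(i | i \notin val I) m.1 i))%N = d.
    by rewrite -md /mcard [in RHS](bigID (fun i => i \in val I)).
  have e2 : (\sum_(i in val I) m.1 i + \sum_(i | i \notin sval I) m.1 i)%N = d := e.
  rewrite -PoszS. move: e2. set A := (\sum_(i in val I) m.1 i)%N. set B := (\sum_(i | i \notin sval I) m.1 i)%N. lia.
have le2 : forall I : Xidx n, ((\sum_(i in val I) m.1 i) <= aI Delta I)%N.
  move=> I; have := hp I; rewrite eq2; lia.
have le1 : forall i, (m.1 i <= 1)%N.
  move=> i.
  have v : validI [set i] by rewrite /validI cards1; lia.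
  have := le2 (exist _ [set i] v); rewrite /= big_set1 => h.
  apply: leq_trans h _; rewrite /aI; apply/bigmax_leqP_seq => s sD _.
  by rewrite /= big_set1; apply: hns.
pose I0 := [set i | m.1 i != 0%N].
have s01 : forall i, m.1 i = (i \in I0) :> nat.
  by move=> i; rewrite inE; have := le1 i; case: (m.1 i) => [|[]].
have cI0 : #|I0| = d.
  rewrite -md /mcard -sum1_card big_mkcond /=; apply: eq_bigr => i _.
  by rewrite s01; case: (i \in I0).
have v0 : validI I0 by rewrite /validI cI0; lia.
have sI0 : (\sum_(i in I0) m.1 i)%N = d.
  by rewrite -cI0 -sum1_card; apply: eq_bigr => i iI; rewrite s01 iI.
have : (d <= aI Delta (exist _ I0 v0))%N by rewrite -{1}sI0; apply: le2.
rewrite /aI /= leqNgt => /negP hmax.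
have [s sD hs] : exists2 s, s \in Delta & (d <= \sum_(i in I0) s i)%N.
  case: (boolP (has (fun s : mset n => d <= \sum_(i in I0) s i)%N Delta)).
    by move=> /hasP[s sD hs]; exists s.
  move=> /hasPn nh; exfalso; apply: hmax.
  apply: (@leq_ltn_trans d.-1); last by rewrite ltn_predL.
  apply/bigmax_leqP_seq => s sD _; have := nh s sD; rewrite /= -ltnNge => h; by rewrite -ltnS prednK.
have ss : mcard s = d by have := hcx.2 s sD; rewrite prednK.
have e3 : (\sum_(i in I0) s i + \sum_(i | i \notin I0) s i)%N = d.
  by rewrite -ss /mcard [in RHS](bigID (fun i => i \in I0)).
have le3 : (\sum_(i in I0) s i <= d)%N.
  rewrite -cI0 -sum1_card; apply: leq_sum => i _; exact: hns.
have pw : forall i, (s i <= m.1 i)%N.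
  move=> i; case: (boolP (i \in I0)) => iI.
    by rewrite s01 iI; apply: hns.
  have : (s i <= \sum_(j | j \notin I0) s j)%N by rewrite (bigD1 i) //= leq_addr.
  lia.
have eqs := sum_le_eq pw (etrans ss (esym md)).
have -> : m.1 = s by apply/ffunP => i; rewrite eqs.
split=> //; apply/ffunP => I; rewrite ffunE eq2; congr (_ - _); congr Posz.
by apply: eq_bigr => i _; rewrite eqs.
Qed.

Theorem mainTheorem8 (R : comPzRingType) (n d : nat) (Delta : seq (mset n))
  (hn : (5 <= n)%N) (hd1 : (1 <= d)%N) (hd2 : (d <= n - 4)%N)
  (hcx : complex d.-1 Delta) (hns : nonsingular Delta)
  (hmin : minimal R d.-1 Delta)
  (f : laurent R n) (hf : inH0 (DDelta d Delta) f) (hf0 : lnonzero f) :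
  exists w : mset n -> R, balancing d.-1 Delta w /\ coef f =1 coef (FDw Delta w).
Proof.
have [H1|H] := eqVneq (1:R) 0.
  exfalso; case: hf0 => m; rewrite /coef big1 ?eqxx // => t _.
  by rewrite -[t.1]mulr1 H1 mulr0.
pose bb (s : mset n) : {ffun Xidx n -> int} :=
  [ffun I : Xidx n => (aI Delta I)%:Z - (\sum_(i in val I) s i)%N%:Z].
pose w (s : mset n) := coef f (s, bb s).
have hsupp := supp_lemma hn hd1 hd2 hcx hns hf.
have hcoef : coef f =1 coef (FDw Delta w).
  move=> m; rewrite {2}/coef /FDw big_map big_mkcond /=.
  case: (boolP (coef f m != 0)) => [nz|].
    have [m1D m2E] := hsupp m nz.
    rewrite (eq_bigr (fun s => if m.1 == s then w s else 0)).
      rewrite (sum_if1 w m1D hcx.1) /w /bb -m2E; by case: m {nz m1D m2E}.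
    move=> s _; case: m nz m1D m2E => m1 m2 /= _ _ ->.
    by rewrite xpair_eqE /=; case: (eqVneq s m1) => [->|ne]; rewrite ?eqxx //
      eq_sym (negbTE ne).
  rewrite negbK => /eqP z; rewrite z big1 // => s _.
  case: ifP => // /eqP e; by rewrite /w e.
have hsum : forall S : mset n, (mcard S < d)%N ->
    \sum_(s <- Delta) (cbin s S)%:R * w s = 0.
  move=> S hS.
  have e := inA_inv H hf.1.1.
  rewrite (Ev_ext _ hcoef) (Ev_ext _ hcoef) in e.
  have e2 := congr1 (mcoeff (mX S)) e.
  move: e2; rewrite /Ev /FDw !big_map !(raddf_sum (mcoeff _)) /=.
  have L1 : forall s b, (((w s : nzR H)%:MP * mon (@g1 R H n) (s, b))@_(mX S) : nzR H)
                      = w s * (cbin s S)%:R.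
    by move=> s b; rewrite mcoeffCM /mon /= key.
  have L0 : forall s b, s \in Delta ->
      (((w s : nzR H)%:MP * mon (@g0 R H n) (s, b))@_(mX S) : nzR H) = 0.
    move=> s b sD; rewrite mcoeffCM /mon /= /g0.
    have -> : \prod_i ('X_i : {mpoly (nzR H)[n.-1]}) ^+ s i = 'X_[mX s].
      by rewrite (mpolyXE_id _ (mX s)); apply: eq_bigr => i _; rewrite /mX mnmE.
    rewrite mcoeffX; case: eqP => [e1|]; last by rewrite mulr0.
    exfalso.
    have ss : mcard s = d by have := hcx.2 s sD; rewrite prednK.
    have : mcard s = mcard S.
      by rewrite /mcard; apply: eq_bigr => i _;
         have := congr1 (fun m : 'X_{1..n.-1} => m i) e1; rewrite /mX !mnmE.
    lia.
  move=> e2.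
  have e3 : \sum_(s <- Delta) (w s : nzR H) * (cbin s S)%:R = 0.
    rewrite -(eq_bigr _ (fun s _ => L1 s (bb s))) e2 big_seq.
    by apply: big1 => s sD; apply: L0.
  transitivity (\sum_(s <- Delta) w s * (cbin s S)%:R).
    by apply: eq_bigr => s _; exact: mulrC.
  exact: e3.
have hsum' : forall S : mset n, (mcard S <= d.-1.-1)%N -> (0 < d.-1)%N ->
    \sum_(s <- Delta) (cbin s S)%:R * w s = 0.
  move=> S hS _; apply: hsum.
  apply: leq_ltn_trans hS (leq_ltn_trans (leq_pred _) _); by rewrite ltn_predL.
pose D' := [seq s <- Delta | w s != 0].
have bal' : balancing d.-1 D' w.
  split; first by move=> s; rewrite mem_filter => /andP[].
  move=> S hS hk; rewrite big_filter big_mkcond /= -[RHS](hsum' S hS hk).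
  by apply: eq_bigr => s _; case: ifP => // /negbFE/eqP->; rewrite mulr0.
case: (boolP (all (fun s => w s != 0) Delta)) => [hall | hnall].
  exists w; split => //; split => //.
  by move=> s sD; exact: (allP hall s sD).
exfalso.
case: (eqVneq D' [::]) => [D0 | Dn].
  case: hf0 => m; rewrite hcoef /coef /FDw big_map big_mkcond big_seq big1 ?eqxx //.
  move=> s sD; case: ifP => // _.
  have : s \notin D' by rewrite D0.
  by rewrite mem_filter sD andbT negbK => /eqP.
apply: (hmin.2.2 D') => //.
- exact: filter_uniq hcx.1.
- by move=> s; rewrite mem_filter => /andP[].
- move/allPn: hnall => [s sD]; rewrite negbK => /eqP ws.
  by exists s => //; rewrite mem_filter ws eqxx.
- by exists w.
Qed.
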